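(* Let $\mathcal{C}=D^{E}\cup A\cup B$ with $D^E=\{0_20_2\rhd\to0_2\rhd,\ 1_20_2\rhd\to1_2\rhd,\ 1_2\rhd\to2_30_2\rhd\}$ and $\mathcal{T}=D^O\cup A\cup B$ with $D^O=\{0_2\rhd\to\rhd,\ 0_21_2\rhd\to1_30_2\rhd,\ 1_21_2\rhd\to2_31_2\rhd\}$. Then: (1) $\mathcal{C}\setminus\{0_20_2\rhd\to0_2\rhd\}$ is terminating iff every nonconvergent Collatz trajectory contains some $n\equiv0\pmod4$; (2) $\mathcal{C}\setminus\{1_20_2\rhd\to1_2\rhd\}$ is terminating iff every nonconvergent Collatz trajectory contains some $n\equiv2\pmod4$; (3) $\mathcal{T}\setminus\{0_21_2\rhd\to1_30_2\rhd\}$ is terminating iff every nonconvergent Collatz trajectory contains some $n\equiv1\pmod4$; (4) $\mathcal{T}\setminus\{1_21_2\rhd\to2_31_2\rhd\}$ is terminating iff every nonconvergent Collatz trajectory contains some $n\equiv3\pmod4$.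
   Context: $C:\mathbb{N}^+\to\mathbb{N}^+$ is the Collatz function $C(n)=n/2$ ($n$ even), $3n+1$ ($n$ odd); the Collatz trajectory of $n$ is $(n,C(n),C^2(n),\dots)$ and is nonconvergent if it does not contain $1$. An SRS induces $u\ell v\to urv$; terminating means no infinite rewrite sequence. Alphabet $\{0_2,1_2,0_3,1_3,2_3,\lhd,\rhd\}$; $A=\{0_20_3\to0_30_2,\ 0_21_3\to0_31_2,\ 0_22_3\to1_30_2,\ 1_20_3\to1_31_2,\ 1_21_3\to2_30_2,\ 1_22_3\to2_31_2\}$; $B=\{\lhd0_3\to\lhd1_2,\ \lhd1_3\to\lhd0_20_2,\ \lhd2_3\to\lhd0_21_2\}$. *)

(* Defs.v *)
From Stdlib Require Import List Arith PeanoNat.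
Import ListNotations.

(** Collatz function on positive naturals (we work in nat; only n >= 1 is used). *)
Definition collatz (n : nat) : nat :=
  if Nat.even n then n / 2 else 3 * n + 1.

Definition traj (n k : nat) : nat := Nat.iter k collatz n.

Definition nonconvergent (n : nat) : Prop := forall k, traj n k <> 1.

Definition every_nonconv_hits (r : nat) : Prop :=
  forall n, 1 <= n -> nonconvergent n -> exists k, traj n k mod 4 = r.

(** Alphabet {0_2,1_2,0_3,1_3,2_3,<|,|>}. *)
Inductive sym : Type := z2 | o2 | z3 | o3 | t3 | lhd | rhd.

Definition sym_eq_dec : forall a b : sym, {a = b} + {a <> b}.
Proof. decide equality. Defined.

Definition word := list sym.
Definition rule := (word * word)%type.
Definition srs := list rule.

Definition rule_eq_dec : forall a b : rule, {a = b} + {a <> b}.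
Proof.
  intros [l1 r1] [l2 r2].
  destruct (list_eq_dec sym_eq_dec l1 l2); destruct (list_eq_dec sym_eq_dec r1 r2);
    subst; try (left; reflexivity); right; congruence.
Defined.

Definition step (R : srs) (x y : word) : Prop :=
  exists u v l r, In (l, r) R /\ x = u ++ l ++ v /\ y = u ++ r ++ v.

Definition terminating (R : srs) : Prop :=
  ~ exists f : nat -> word, forall i, step R (f i) (f (S i)).

Definition srs_remove (R : srs) (rho : rule) : srs :=
  filter (fun r => if rule_eq_dec r rho then false else true) R.

Definition A_rules : srs :=
  [ ([z2; z3], [z3; z2]);
    ([z2; o3], [z3; o2]);
    ([z2; t3], [o3; z2]);
    ([o2; z3], [o3; o2]);
    ([o2; o3], [t3; z2]);
    ([o2; t3], [t3; o2]) ].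

Definition B_rules : srs :=
  [ ([lhd; z3], [lhd; o2]);
    ([lhd; o3], [lhd; z2; z2]);
    ([lhd; t3], [lhd; z2; o2]) ].

Definition DE1 : rule := ([z2; z2; rhd], [z2; rhd]).
Definition DE2 : rule := ([o2; z2; rhd], [o2; rhd]).
Definition DE3 : rule := ([o2; rhd], [t3; z2; rhd]).
Definition DE_rules : srs := [DE1; DE2; DE3].

Definition DO1 : rule := ([z2; rhd], [rhd]).
Definition DO2 : rule := ([z2; o2; rhd], [o3; z2; rhd]).
Definition DO3 : rule := ([o2; o2; rhd], [t3; o2; rhd]).
Definition DO_rules : srs := [DO1; DO2; DO3].

Definition C_srs : srs := DE_rules ++ A_rules ++ B_rules.
Definition T_srs : srs := DO_rules ++ A_rules ++ B_rules.

(* Main.v *)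
Require Import Defs.
From Stdlib Require Import List Arith PeanoNat Lia Classical ClassicalEpsilon Wf_nat.
Import ListNotations.

Lemma mod4_spec n : n = 4*(n/4) + n mod 4 /\ n mod 4 < 4.
Proof. split; [apply Nat.div_mod; lia | apply Nat.mod_upper_bound; lia]. Qed.

Definition isbin c := match c with z2 | o2 => true | _ => false end.
Definition istern c := match c with z3 | o3 | t3 => true | _ => false end.
Definition isl c := match c with lhd => true | _ => false end.
Definition isr c := match c with rhd => true | _ => false end.

Fixpoint cnt (p : sym -> bool) (w : word) : nat :=
  match w with [] => 0 | c :: w' => (if p c then 1 else 0) + cnt p w' end.

Lemma cnt_app p x y : cnt p (x ++ y) = cnt p x + cnt p y.
Proof. induction x; simpl; auto. rewrite IHx; lia. Qed.
Lemma cnt_rev p x : cnt p (rev x) = cnt p x.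
Proof. induction x; simpl; auto. rewrite cnt_app; simpl; lia. Qed.

Fixpoint inv (w : word) : nat :=
  match w with [] => 0 | c :: w' => (if isbin c then cnt istern w' else 0) + inv w' end.
Lemma inv_app x y : inv (x ++ y) = inv x + inv y + cnt isbin x * cnt istern y.
Proof. induction x; simpl; auto. rewrite IHx, cnt_app. destruct (isbin a); lia. Qed.

Definition dstep (acc : nat) (c : sym) : nat :=
  match c with z2 => 2*acc | o2 => 2*acc+1 | z3 => 3*acc | o3 => 3*acc+1
  | t3 => 3*acc+2 | lhd => 1 | rhd => acc end.
Definition vf (acc : nat) (w : word) : nat := fold_left dstep w acc.
Lemma vf_app acc x y : vf acc (x ++ y) = vf (vf acc x) y.
Proof. unfold vf; apply fold_left_app. Qed.

Lemma vf_ge1 w : forall acc, 1 <= acc \/ 1 <= cnt isl w -> 1 <= vf acc w.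
Proof.
  induction w as [|c w IH]; intros acc H; simpl in *. lia.
  unfold vf; simpl; fold (vf (dstep acc c) w).
  destruct c; simpl in *; apply IH; lia.
Qed.

Definition endsr (w : word) : bool := match rev w with rhd :: _ => true | _ => false end.
Definition endz (w : word) : bool := match rev w with rhd :: z2 :: _ => true | _ => false end.
Definition I1 w := if endz w then 0 else 1.

Lemma endsr_app x v : v <> [] -> endsr (x ++ v) = endsr v.
Proof.
  intros H; unfold endsr; rewrite rev_app_distr. destruct (rev v) eqn:E.
  - apply (f_equal (@rev sym)) in E; rewrite rev_involutive in E; simpl in E; contradiction.
  - reflexivity.
Qed.
Lemma endsr_cnt v : endsr v = true -> 1 <= cnt isr v.
Proof.
  unfold endsr; rewrite <- (cnt_rev _ v). destruct (rev v) as [|c t]; try discriminate.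
  destruct c; try discriminate; simpl; lia.
Qed.
Lemma endsr_snoc x : endsr (x ++ [rhd]) = true.
Proof. unfold endsr; rewrite rev_app_distr; reflexivity. Qed.
Lemma endsr_step u l r v : endsr (u ++ l ++ v) = true -> l <> [] ->
  (endsr l = true -> endsr r = true) -> endsr (u ++ r ++ v) = true.
Proof.
  intros H Hl Hlr. destruct v as [|c v].
  - rewrite app_nil_r in *. rewrite endsr_app in H by auto.
    specialize (Hlr H). rewrite endsr_app; auto. intros ->; discriminate.
  - rewrite app_assoc in *. rewrite endsr_app in * by discriminate. auto.
Qed.
Lemma v_nil u l0 v : cnt isr (u ++ (l0 ++ [rhd]) ++ v) = 1 ->
  endsr (u ++ (l0 ++ [rhd]) ++ v) = true -> v = [].
Proof.
  intros Hc He. destruct v as [|c v]; auto. exfalso.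
  rewrite app_assoc, endsr_app in He by discriminate. apply endsr_cnt in He.
  rewrite !cnt_app in Hc. simpl in Hc, He. lia.
Qed.

Lemma endz_A u b t c d v : istern t = true -> endz (u ++ [b;t] ++ v) = true ->
  endz (u ++ [c;d] ++ v) = true.
Proof.
  intros Ht. unfold endz; rewrite !rev_app_distr; simpl.
  destruct (rev v) as [|x1 [|x2 rv]]; simpl; destruct t; simpl in *; try discriminate;
   try (destruct x1; discriminate); auto.
Qed.
Lemma endz_o2 x : endz (x ++ [o2; rhd]) = false.
Proof. unfold endz; rewrite rev_app_distr; reflexivity. Qed.
Lemma endz_z2 x : endz (x ++ [z2; rhd]) = true.
Proof. unfold endz; rewrite rev_app_distr; reflexivity. Qed.

Lemma first_split p a w : (forall c, p c = true -> c = a) -> 1 <= cnt p w ->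
  exists x y, w = x ++ a :: y /\ cnt p x = 0.
Proof.
  intros Hp. induction w as [|c w IH]; simpl; intros H. lia.
  destruct (p c) eqn:E.
  - apply Hp in E; subst. exists [], w; auto.
  - destruct (IH H) as [x [y [-> Hx]]]. exists (c :: x), y. simpl; rewrite E; auto.
Qed.
Lemma last_split p a w : (forall c, p c = true -> c = a) -> 1 <= cnt p w ->
  exists x y, w = x ++ a :: y /\ cnt p y = 0.
Proof.
  intros Hp. induction w as [|c w IH]; simpl; intros H. lia.
  destruct (Nat.le_gt_cases 1 (cnt p w)) as [H1|H1].
  - destruct (IH H1) as [x [y [-> Hy]]]. exists (c :: x), y; auto.
  - destruct (p c) eqn:E; [|lia]. apply Hp in E; subst. exists [], w; split; auto; lia.
Qed.
Lemma first_occ p a : p a = true -> forall p1 p2 q1 q2, cnt p p1 = 0 -> cnt p p2 = 0 ->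
  p1 ++ a :: q1 = p2 ++ a :: q2 -> p1 = p2 /\ q1 = q2.
Proof.
  intros Ha. induction p1 as [|c p1 IH]; intros [|c' p2] q1 q2 H1 H2 E; simpl in *.
  - inversion E; auto.
  - inversion E; subst. rewrite Ha in H2; lia.
  - inversion E; subst. rewrite Ha in H1; lia.
  - inversion E; subst. destruct (p c'); [lia|].
    destruct (IH p2 q1 q2) as [-> ->]; auto.
Qed.
Lemma last_occ p a : p a = true -> forall p1 p2 q1 q2, cnt p q1 = 0 -> cnt p q2 = 0 ->
  p1 ++ a :: q1 = p2 ++ a :: q2 -> p1 = p2 /\ q1 = q2.
Proof.
  intros Ha. induction p1 as [|c p1 IH]; intros [|c' p2] q1 q2 H1 H2 E; simpl in *.
  - inversion E; auto.
  - inversion E; subst. rewrite cnt_app in H1; simpl in H1; rewrite Ha in H1; lia.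
  - inversion E; subst. rewrite cnt_app in H2; simpl in H2; rewrite Ha in H2; lia.
  - inversion E; subst. destruct (IH p2 q1 q2) as [-> ->]; auto.
Qed.

Definition rhd_prop (R : srs) := forall l r, In (l,r) R ->
  (cnt isr l = 0 /\ cnt isr r = 0) \/
  (exists l0 r0, l = l0 ++ [rhd] /\ r = r0 ++ [rhd] /\ cnt isr l0 = 0 /\ cnt isr r0 = 0).
Definition lhd_prop (R : srs) := forall l r, In (l,r) R ->
  (cnt isl l = 0 /\ cnt isl r = 0) \/
  (exists l0 r0, l = lhd :: l0 /\ r = lhd :: r0 /\ cnt isl l0 = 0 /\ cnt isl r0 = 0).

Lemma isr_eq c : isr c = true -> c = rhd. Proof. destruct c; simpl; congruence. Qed.
Lemma isl_eq c : isl c = true -> c = lhd. Proof. destruct c; simpl; congruence. Qed.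

Ltac leq := simpl; repeat (rewrite <- ?app_assoc; simpl); reflexivity.

Lemma split_r R x y z : rhd_prop R -> cnt isr x = 0 -> step R (x ++ rhd :: y) z ->
  (exists x', cnt isr x' = 0 /\ z = x' ++ rhd :: y /\ step R (x ++ [rhd]) (x' ++ [rhd])) \/
  (exists y', z = x ++ rhd :: y' /\ step R y y').
Proof.
  intros HR Hx [u [v [l [r [Hin [Hw ->]]]]]].
  destruct (Nat.eq_dec (cnt isr u) 0) as [Hu|Hu].
  - destruct (HR _ _ Hin) as [[Hl Hr] | [l0 [r0 [-> [-> [Hl0 Hr0]]]]]].
    + assert (1 <= cnt isr v).
      { apply (f_equal (cnt isr)) in Hw. rewrite !cnt_app in Hw; simpl in Hw. lia. }
      destruct (first_split isr rhd v isr_eq H) as [v1 [v2 [-> Hv1]]].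
      assert (E: (u ++ l ++ v1) ++ rhd :: v2 = x ++ rhd :: y) by (etransitivity; [|symmetry; exact Hw]; leq).
      apply (first_occ isr rhd eq_refl) in E as [<- <-]; [| rewrite !cnt_app; lia | auto].
      left. exists (u ++ r ++ v1). split; [rewrite !cnt_app; lia|]. split; [leq|].
      exists u, (v1 ++ [rhd]), l, r. split; auto. split; leq.
    + assert (E: (u ++ l0) ++ rhd :: v = x ++ rhd :: y) by (etransitivity; [|symmetry; exact Hw]; leq).
      apply (first_occ isr rhd eq_refl) in E as [<- <-]; [| rewrite !cnt_app; lia | auto].
      left. exists (u ++ r0). split; [rewrite !cnt_app; lia|]. split; [leq|].
      exists u, [], (l0 ++ [rhd]), (r0 ++ [rhd]). split; auto. split; leq.
  - destruct (first_split isr rhd u isr_eq ltac:(lia)) as [u1 [u2 [-> Hu1]]].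
    assert (E: u1 ++ rhd :: (u2 ++ l ++ v) = x ++ rhd :: y) by (etransitivity; [|symmetry; exact Hw]; leq).
    apply (first_occ isr rhd eq_refl) in E as [<- <-]; auto.
    right. exists (u2 ++ r ++ v). split; [leq|]. exists u2, v, l, r; auto.
Qed.

Lemma split_l R p s z : lhd_prop R -> cnt isl s = 0 -> step R (p ++ lhd :: s) z ->
  (exists p', z = p' ++ lhd :: s /\ step R p p') \/
  (exists s', cnt isl s' = 0 /\ z = p ++ lhd :: s' /\ step R (lhd :: s) (lhd :: s')).
Proof.
  intros HR Hs [u [v [l [r [Hin [Hw ->]]]]]].
  destruct (Nat.eq_dec (cnt isl v) 0) as [Hv|Hv].
  - destruct (HR _ _ Hin) as [[Hl Hr] | [l0 [r0 [-> [-> [Hl0 Hr0]]]]]].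
    + assert (1 <= cnt isl u).
      { apply (f_equal (cnt isl)) in Hw. rewrite !cnt_app in Hw; simpl in Hw. lia. }
      destruct (last_split isl lhd u isl_eq H) as [u1 [u2 [-> Hu2]]].
      assert (E: u1 ++ lhd :: (u2 ++ l ++ v) = p ++ lhd :: s) by (etransitivity; [|symmetry; exact Hw]; leq).
      apply (last_occ isl lhd eq_refl) in E as [<- <-]; [| rewrite !cnt_app; lia | auto].
      right. exists (u2 ++ r ++ v). split; [rewrite !cnt_app; lia|]. split; [leq|].
      exists (lhd :: u2), v, l, r. split; auto; try (split; leq).
    + assert (E: u ++ lhd :: (l0 ++ v) = p ++ lhd :: s) by (etransitivity; [|symmetry; exact Hw]; leq).
      apply (last_occ isl lhd eq_refl) in E as [<- <-]; [| rewrite !cnt_app; lia | auto].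
      right. exists (r0 ++ v). split; [rewrite !cnt_app; lia|]. split; [leq|].
      exists [], v, (lhd :: l0), (lhd :: r0). split; auto.
  - destruct (last_split isl lhd v isl_eq ltac:(lia)) as [v1 [v2 [-> Hv2]]].
    assert (E: (u ++ l ++ v1) ++ lhd :: v2 = p ++ lhd :: s) by (etransitivity; [|symmetry; exact Hw]; leq).
    apply (last_occ isl lhd eq_refl) in E as [<- <-]; auto.
    left. exists (u ++ r ++ v1). split; [leq|]. exists u, v1, l, r; auto.
Qed.

Definition Sr (R : srs) := fun a b => step R b a.

Lemma accR R : rhd_prop R -> forall w, Acc (Sr R) w -> forall x, w = x ++ [rhd] -> cnt isr x = 0 ->
  forall y, Acc (Sr R) y -> Acc (Sr R) (x ++ rhd :: y).
Proof.
  intros HR w Hw. induction Hw as [w Hw IHw]. intros x -> Hx y Hy.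
  induction Hy as [y Hy IHy]. constructor. intros z Hz.
  destruct (split_r R x y z HR Hx Hz) as [[x' [Hx' [-> Hs]]] | [y' [-> Hs]]].
  - eapply IHw; eauto. constructor; exact Hy.
  - apply IHy; auto.
Qed.

Lemma accL R : lhd_prop R -> forall p, Acc (Sr R) p -> forall w, Acc (Sr R) w -> forall s, w = lhd :: s ->
  cnt isl s = 0 -> Acc (Sr R) (p ++ lhd :: s).
Proof.
  intros HR p Hp. induction Hp as [p Hp IHp]. intros w Hw.
  induction Hw as [w Hw IHw]. intros s -> Hs. constructor. intros z Hz.
  destruct (split_l R p s z HR Hs Hz) as [[p' [-> Hst]] | [s' [Hs' [-> Hst]]]].
  - apply (IHp p' Hst (lhd :: s)); [constructor; exact Hw | reflexivity | exact Hs].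
  - eapply IHw; eauto.
Qed.

Lemma lex_ind {A} (f g : A -> nat) (Q : A -> Prop) :
  (forall w, (forall z, f z < f w \/ (f z = f w /\ g z < g w) -> Q z) -> Q w) -> forall w, Q w.
Proof.
  intros H. assert (H0 : forall n m w, f w = n -> g w = m -> Q w).
  { intro n. induction n as [n IHn] using lt_wf_ind. intro m.
    induction m as [m IHm] using lt_wf_ind.
    intros w Hf Hg. apply H. intros z [Hz|[Hz1 Hz2]].
    - apply (IHn (f z)) with (m := g z); lia.
    - apply (IHm (g z)); lia. }
  intros w; eapply H0; reflexivity.
Qed.

Lemma acc_noinf R w : Acc (Sr R) w -> forall f, f 0 = w -> (forall i, step R (f i) (f (S i))) -> False.
Proof.
  induction 1 as [w _ IH]. intros f Hf Hs.
  apply (IH (f 1) ltac:(rewrite <- Hf; apply Hs) (fun i => f (S i))); [reflexivity | intro i; apply Hs].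
Qed.

Lemma A_props l r : In (l,r) A_rules ->
  (exists b t c d, l = [b;t] /\ r = [c;d] /\ istern t = true) /\
  cnt isl l = 0 /\ cnt isl r = 0 /\ cnt isr l = 0 /\ cnt isr r = 0 /\
  cnt istern l = cnt istern r /\ cnt isbin l = cnt isbin r /\ inv r < inv l /\
  (forall acc, vf acc l = vf acc r) /\ endsr l = false.
Proof.
  simpl; intros H; repeat destruct H as [H|H]; try contradiction; inversion H; subst;
  (split; [do 4 eexists; split; [reflexivity|split; reflexivity]|]);
  repeat split; simpl; try lia; try reflexivity; intros; unfold vf; simpl; lia.
Qed.

Lemma B_props l r : In (l,r) B_rules ->
  (exists l0 r0, l = lhd :: l0 /\ r = lhd :: r0 /\ cnt isl l0 = 0 /\ cnt isl r0 = 0) /\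
  cnt isr l = 0 /\ cnt isr r = 0 /\ cnt istern r < cnt istern l /\
  (forall acc, vf acc l = vf acc r) /\ endsr l = false.
Proof.
  simpl; intros H; repeat destruct H as [H|H]; try contradiction; inversion H; subst;
  (split; [do 2 eexists; split; [reflexivity|split; [reflexivity|split; reflexivity]]|]);
  repeat split; simpl; try lia; try reflexivity; intros; unfold vf; simpl; lia.
Qed.

Definition sem (rho : nat) (l0 r0 : word) : Prop :=
  forall a, 1 <= a -> vf a l0 <> 1 /\ vf a l0 mod 4 <> rho /\
    (vf a r0 = collatz (vf a l0) \/
     (vf a r0 = collatz (collatz (vf a l0)) /\ collatz (vf a l0) <> 1 /\
      collatz (vf a l0) mod 4 <> rho)).

Definition Dgood (rho : nat) (D : srs) : Prop :=
  forall l r, In (l,r) D -> exists l0 r0, l = l0 ++ [rhd] /\ r = r0 ++ [rhd] /\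
    cnt isl l0 = 0 /\ cnt isr l0 = 0 /\ cnt isl r0 = 0 /\ cnt isr r0 = 0 /\
    (cnt isbin r0 < cnt isbin l0 \/ ((exists l1, l0 = l1 ++ [o2]) /\ (exists r1, r0 = r1 ++ [z2])
       /\ cnt isbin r0 = cnt isbin l0)) /\
    sem rho l0 r0.


Lemma R_rhd rho D : Dgood rho D -> rhd_prop (D ++ A_rules ++ B_rules).
Proof.
  intros HD l r Hin. apply in_app_or in Hin as [Hin|Hin].
  - right. destruct (HD _ _ Hin) as [l0 [r0 [-> [-> [_ [? [_ [? _]]]]]]]]. eauto 10.
  - left. apply in_app_or in Hin as [Hin|Hin].
    + apply A_props in Hin; tauto.
    + apply B_props in Hin; tauto.
Qed.

Lemma R_lhd rho D : Dgood rho D -> lhd_prop (D ++ A_rules ++ B_rules).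
Proof.
  intros HD l r Hin. apply in_app_or in Hin as [Hin|Hin].
  - left. destruct (HD _ _ Hin) as [l0 [r0 [-> [-> [? [_ [? _]]]]]]].
    rewrite !cnt_app; simpl; lia.
  - apply in_app_or in Hin as [Hin|Hin].
    + left. apply A_props in Hin; tauto.
    + right. apply B_props in Hin; tauto.
Qed.

Lemma acc0 rho D (HD : Dgood rho D) : forall w, cnt isr w = 0 -> Acc (Sr (D ++ A_rules ++ B_rules)) w.
Proof.
  apply (lex_ind (cnt istern) inv (fun w => cnt isr w = 0 -> Acc _ w)).
  intros w IH Hw. constructor. intros z [u [v [l [r [Hin [-> ->]]]]]].
  rewrite !cnt_app in Hw.
  apply in_app_or in Hin as [Hin|Hin].
  - destruct (HD _ _ Hin) as [l0 [r0 [-> _]]]. rewrite cnt_app in Hw; simpl in Hw; lia.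
  - apply in_app_or in Hin as [Hin|Hin].
    + apply A_props in Hin as [_ [_ [_ [_ [Hr [Ht [Hb [Hi _]]]]]]]].
      apply IH; [right; split| rewrite !cnt_app; lia].
      * rewrite !cnt_app; lia.
      * rewrite !inv_app, !cnt_app. rewrite Ht, Hb. lia.
    + apply B_props in Hin as [_ [_ [Hr [Ht _]]]].
      apply IH; [left | ]; rewrite !cnt_app; lia.
Qed.

Lemma acc1 rho D (HD : Dgood rho D) : forall w, cnt isl w = 0 -> cnt isr w = 1 -> endsr w = true ->
  Acc (Sr (D ++ A_rules ++ B_rules)) w.
Proof.
  apply (lex_ind (fun w => 2 * cnt isbin w + I1 w) inv
           (fun w => cnt isl w = 0 -> cnt isr w = 1 -> endsr w = true -> Acc _ w)).
  intros w IH Hl Hr He. constructor. intros z [u [v [l [r [Hin [-> ->]]]]]].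
  apply in_app_or in Hin as [Hin|Hin].
  - destruct (HD _ _ Hin) as [l0 [r0 [-> [-> [Hl0 [Hr0 [Hl0' [Hr0' [Hm _]]]]]]]]].
    assert (v = []) by (eapply v_nil; eauto). subst v.
    apply IH.
    + unfold I1. rewrite !app_nil_r. rewrite !cnt_app.
      destruct Hm as [Hm | [[l1 ->] [[r1 ->] Hm]]].
      * destruct (endz (u ++ r0 ++ [rhd])), (endz (u ++ (l0 ++ [rhd]))); left; lia.
      * replace (u ++ (l1 ++ [o2]) ++ [rhd]) with ((u ++ l1) ++ [o2;rhd]) by leq.
        replace (u ++ (r1 ++ [z2]) ++ [rhd]) with ((u ++ r1) ++ [z2;rhd]) by leq.
        rewrite endz_o2, endz_z2. left. rewrite !cnt_app in Hm |- *. lia.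
    + rewrite !cnt_app in *; simpl in *; lia.
    + rewrite !cnt_app in *; simpl in *; lia.
    + rewrite !app_nil_r, app_assoc. apply endsr_snoc.
  - apply in_app_or in Hin as [Hin|Hin].
    + apply A_props in Hin as [[b [t [c [d [-> [-> Htt]]]]]] [Hl1 [Hl2 [Hr1 [Hr2 [Ht [Hb [Hi [Hv Hel]]]]]]]]].
      apply IH.
      * assert (Hinv : inv (u ++ [c; d] ++ v) < inv (u ++ [b; t] ++ v))
          by (rewrite !inv_app, !cnt_app; rewrite Ht, Hb; lia).
        unfold I1. destruct (endz (u ++ [b; t] ++ v)) eqn:E.
        -- rewrite (endz_A u b t c d v Htt E). right; split; auto. rewrite !cnt_app, Hb; lia.
        -- destruct (endz (u ++ [c;d] ++ v)); [left|right; split; auto]; rewrite !cnt_app, Hb; lia.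
      * rewrite !cnt_app in *; lia.
      * rewrite !cnt_app in *; lia.
      * eapply endsr_step; eauto; [discriminate | congruence].
    + apply B_props in Hin as [[l0 [r0 [-> _]]] _]. rewrite !cnt_app in Hl; simpl in Hl; lia.
Qed.

Definition Good rho n k := exists j, j <= k /\ (traj n j = 1 \/ traj n j mod 4 = rho).

Lemma traj_S n j : traj n (S j) = traj (collatz n) j.
Proof. unfold traj; apply Nat.iter_succ_r. Qed.

Lemma acc2 rho D (HD : Dgood rho D) : forall k w, cnt isl w = 1 -> cnt isr w = 1 -> endsr w = true ->
  Good rho (vf 0 w) k -> Acc (Sr (D ++ A_rules ++ B_rules)) w.
Proof.
  intro k. induction k as [k IHk] using lt_wf_ind.
  apply (lex_ind (cnt istern) inv
           (fun w => cnt isl w = 1 -> cnt isr w = 1 -> endsr w = true -> Good rho (vf 0 w) k -> Acc _ w)).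
  intros w IH Hl Hr He HG. constructor. intros z [u [v [l [r [Hin [-> ->]]]]]].
  apply in_app_or in Hin as [Hin|Hin].
  - destruct (HD _ _ Hin) as [l0 [r0 [-> [-> [Hl0 [Hr0 [Hl0' [Hr0' [_ Hsem]]]]]]]]].
    assert (v = []) by (eapply v_nil; eauto). subst v. rewrite !app_nil_r in *.
    assert (Ha : 1 <= vf 0 u) by (apply vf_ge1; right; rewrite !cnt_app in Hl; simpl in Hl; lia).
    destruct (Hsem _ Ha) as [Hn1 [Hnr Hc]].
    assert (Hw: vf 0 (u ++ l0 ++ [rhd]) = vf (vf 0 u) l0) by (rewrite !vf_app; reflexivity).
    assert (Hz: vf 0 (u ++ r0 ++ [rhd]) = vf (vf 0 u) r0) by (rewrite !vf_app; reflexivity).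
    destruct HG as [j [Hj Hj']]. rewrite Hw in Hj'.
    assert (Hl2 : cnt isl (u ++ r0 ++ [rhd]) = 1) by (rewrite !cnt_app in *; simpl in *; lia).
    assert (Hr2 : cnt isr (u ++ r0 ++ [rhd]) = 1) by (rewrite !cnt_app in *; simpl in *; lia).
    assert (He2 : endsr (u ++ r0 ++ [rhd]) = true) by (rewrite app_assoc; apply endsr_snoc).
    destruct j as [|j]; [simpl in Hj'; tauto|].
    rewrite traj_S in Hj'.
    destruct Hc as [Hc | [Hc [Hc1 Hc2]]].
    + apply (IHk (k - 1)); [lia | auto | auto | auto |].
      exists j. split; [lia|]. rewrite Hz, Hc. auto.
    + destruct j as [|j]; [simpl in Hj'; tauto|].
      rewrite traj_S in Hj'.
      apply (IHk (k - 2)); [lia | auto | auto | auto |].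
      exists j. split; [lia|]. rewrite Hz, Hc. auto.
  - apply in_app_or in Hin as [Hin|Hin].
    + apply A_props in Hin as [[b [t [c [d [-> [-> Htt]]]]]] [Hl1 [Hl2 [Hr1 [Hr2 [Ht [Hb [Hi [Hv Hel]]]]]]]]].
      apply IH.
      * right. split; [rewrite !cnt_app; lia|].
        rewrite !inv_app, !cnt_app. rewrite Ht, Hb. lia.
      * rewrite !cnt_app in *; lia.
      * rewrite !cnt_app in *; lia.
      * eapply endsr_step; eauto; [discriminate | congruence].
      * rewrite !vf_app in *. rewrite <- Hv. auto.
    + apply B_props in Hin as [[l0 [r0 [-> [-> [Hl1 Hl2]]]]] [Hr1 [Hr2 [Ht [Hv Hel]]]]].
      apply IH.
      * left. rewrite !cnt_app; lia.
      * rewrite !cnt_app in *; simpl in *; lia.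
      * rewrite !cnt_app in *; lia.
      * eapply endsr_step; eauto; [discriminate | congruence].
      * rewrite !vf_app in *. rewrite <- Hv. auto.
Qed.

Lemma acc_all rho D (HD : Dgood rho D) (H : forall n, 1 <= n -> exists k, Good rho n k) :
  forall w, Acc (Sr (D ++ A_rules ++ B_rules)) w.
Proof.
  assert (forall n w, length w = n -> Acc (Sr (D ++ A_rules ++ B_rules)) w); [|eauto].
  intro n. induction n as [n IH] using lt_wf_ind. intros w Hn.
  destruct (Nat.eq_dec (cnt isr w) 0) as [Hr|Hr]; [eapply acc0; eauto|].
  destruct (first_split isr rhd w isr_eq ltac:(lia)) as [x [y [-> Hx]]].
  eapply accR; [eapply R_rhd; eauto | | reflexivity | auto | ].
  - destruct (Nat.eq_dec (cnt isl x) 0) as [Hl|Hl].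
    + eapply acc1; eauto; [rewrite cnt_app; simpl; lia | rewrite cnt_app; simpl; lia | apply endsr_snoc].
    + destruct (last_split isl lhd x isl_eq ltac:(lia)) as [p [q [-> Hq]]].
      replace ((p ++ lhd :: q) ++ [rhd]) with (p ++ lhd :: (q ++ [rhd])) by leq.
      rewrite cnt_app in Hx; simpl in Hx.
      eapply accL; [eapply R_lhd; eauto | eapply acc0; eauto; lia | | reflexivity |
                    rewrite cnt_app; simpl; lia].
      assert (Hv : 1 <= vf 0 (lhd :: q ++ [rhd])) by (apply vf_ge1; simpl; lia).
      destruct (H _ Hv) as [k Hk].
      eapply (acc2 rho D HD k); eauto; simpl; rewrite ?cnt_app; simpl; try lia.
      change (lhd :: q ++ [rhd]) with ((lhd :: q) ++ [rhd]); apply endsr_snoc.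
  - apply (IH (length y)); auto. rewrite <- Hn, length_app; simpl; lia.
Qed.

Lemma hits_good rho : every_nonconv_hits rho -> forall n, 1 <= n -> exists k, Good rho n k.
Proof.
  intros H n Hn. destruct (classic (exists k, traj n k = 1)) as [[k Hk]|Hk].
  - exists k, k; auto.
  - destruct (H n Hn) as [k Hk'].
    + intros k Hk2; apply Hk; eauto.
    + exists k, k; auto.
Qed.

Theorem dir_back rho D : Dgood rho D -> every_nonconv_hits rho -> terminating (D ++ A_rules ++ B_rules).
Proof.
  intros HD H [f Hf]. eapply acc_noinf; [apply (acc_all rho D HD (hits_good rho H)) | reflexivity | exact Hf].
Qed.

Definition bins (q : word) := Forall (fun c => isbin c = true) q.

Inductive star (R : word -> word -> Prop) : word -> word -> Prop :=
| star_refl x : star R x x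
| star_step x y z : R x y -> star R y z -> star R x z.

Lemma step_intro R l r u v x y : In (l,r) R -> x = u ++ l ++ v -> y = u ++ r ++ v -> step R x y.
Proof. intros; exists u, v, l, r; auto. Qed.

Lemma A_cover b t : isbin b = true -> istern t = true -> exists c d,
  In ([b;t],[c;d]) A_rules /\ istern c = true /\ isbin d = true /\ forall acc, vf acc [b;t] = vf acc [c;d].
Proof.
  destruct b, t; simpl; intros; try discriminate;
  (do 2 eexists; split; [simpl; tauto|]); repeat split; intros; unfold vf; simpl; lia.
Qed.

Lemma push R : incl A_rules R -> incl B_rules R -> forall p, bins p -> forall t s, istern t = true -> bins s ->
  exists q', bins q' /\ vf 1 q' = vf 1 (p ++ t :: s) /\
    star (step R) (lhd :: p ++ t :: s ++ [rhd]) (lhd :: q' ++ [rhd]).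
Proof.
  intros HA HB p. induction p as [|b p IH] using rev_ind; intros Hp t s Ht Hs.
  - destruct t; try discriminate.
    + exists (o2 :: s). split; [constructor; auto|]. split; [reflexivity|].
      eapply star_step; [|apply star_refl].
      eapply (step_intro R [lhd; z3] [lhd; o2] [] (s ++ [rhd])); [apply HB; simpl; tauto | reflexivity | reflexivity].
    + exists (z2 :: z2 :: s). split; [repeat constructor; auto|]. split; [reflexivity|].
      eapply star_step; [|apply star_refl].
      eapply (step_intro R [lhd; o3] [lhd; z2; z2] [] (s ++ [rhd])); [apply HB; simpl; tauto | reflexivity | reflexivity].
    + exists (z2 :: o2 :: s). split; [repeat constructor; auto|]. split; [reflexivity|].
      eapply star_step; [|apply star_refl].
      eapply (step_intro R [lhd; t3] [lhd; z2; o2] [] (s ++ [rhd])); [apply HB; simpl; tauto | reflexivity | reflexivity].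
  - unfold bins in Hp. apply Forall_app in Hp as [Hp Hb]. inversion Hb; subst.
    destruct (A_cover b t H1 Ht) as [c [d [Hin [Hc [Hd Hv]]]]].
    destruct (IH Hp c (d :: s) Hc (Forall_cons _ Hd Hs)) as [q' [Hq' [Hv' Hst]]].
    exists q'. split; auto. split.
    + rewrite Hv'. replace ((p ++ [b]) ++ t :: s) with (p ++ [b;t] ++ s) by leq.
      replace (p ++ c :: d :: s) with (p ++ [c;d] ++ s) by leq.
      rewrite !vf_app, Hv. reflexivity.
    + eapply star_step; [|exact Hst].
      eapply (step_intro R [b;t] [c;d] (lhd :: p) (s ++ [rhd])); [apply HA; auto | leq | leq].
Qed.

Definition Qw rho (w : word) := exists q, w = lhd :: q ++ [rhd] /\ bins q /\
  (forall j, traj (vf 1 q) j <> 1 /\ traj (vf 1 q) j mod 4 <> rho).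

Definition Cover rho D := forall q, bins q ->
  (forall j, traj (vf 1 q) j <> 1 /\ traj (vf 1 q) j mod 4 <> rho) ->
  exists q0 l0 r0, In (l0 ++ [rhd], r0 ++ [rhd]) D /\ q = q0 ++ l0 /\
    (bins r0 \/ exists t s, r0 = t :: s /\ istern t = true /\ bins s).

Lemma bins_vf1 q : 1 <= vf 1 q.
Proof. apply vf_ge1; auto. Qed.

Lemma sim rho D : Dgood rho D -> Cover rho D -> forall w, Qw rho w ->
  exists w1 w2, step (D ++ A_rules ++ B_rules) w w1 /\ star (step (D ++ A_rules ++ B_rules)) w1 w2 /\ Qw rho w2.
Proof.
  intros HD HC w [q [-> [Hq Ht]]].
  destruct (HC q Hq Ht) as [q0 [l0 [r0 [Hin [-> Hr0]]]]].
  destruct (HD _ _ Hin) as [l0' [r0' [El [Er [_ [_ [_ [_ [_ Hsem]]]]]]]]].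
  apply app_inj_tail in El as [<- _]. apply app_inj_tail in Er as [<- _].
  unfold bins in Hq; apply Forall_app in Hq as [Hq0 _].
  assert (Ha : 1 <= vf 1 q0) by apply bins_vf1.
  destruct (Hsem _ Ha) as [_ [_ Hc]].
  assert (Hnew : forall j, traj (vf (vf 1 q0) r0) j <> 1 /\ traj (vf (vf 1 q0) r0) j mod 4 <> rho).
  { intro j. rewrite vf_app in Ht. destruct Hc as [Hc | [Hc _]]; rewrite Hc.
    - rewrite <- traj_S. apply Ht.
    - rewrite <- !traj_S. apply Ht. }
  assert (Hs1 : step (D ++ A_rules ++ B_rules) (lhd :: (q0 ++ l0) ++ [rhd]) (lhd :: q0 ++ r0 ++ [rhd])).
  { eapply (step_intro _ (l0 ++ [rhd]) (r0 ++ [rhd]) (lhd :: q0) []);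
      [apply in_or_app; auto | leq | leq]. }
  destruct Hr0 as [Hr0 | [t [s [-> [Htt Hs]]]]].
  - exists (lhd :: q0 ++ r0 ++ [rhd]), (lhd :: q0 ++ r0 ++ [rhd]). split; auto. split; [apply star_refl|].
    exists (q0 ++ r0). split; [leq|]. split; [apply Forall_app; auto|]. rewrite vf_app; auto.
  - assert (HA : incl A_rules (D ++ A_rules ++ B_rules)) by (intros x Hx; apply in_or_app; right; apply in_or_app; auto).
    assert (HB : incl B_rules (D ++ A_rules ++ B_rules)) by (intros x Hx; apply in_or_app; right; apply in_or_app; auto).
    destruct (push _ HA HB q0 Hq0 t s Htt Hs) as [q' [Hq' [Hv Hst]]].
    exists (lhd :: q0 ++ t :: s ++ [rhd]), (lhd :: q' ++ [rhd]). split; auto.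
    split; auto. exists q'. split; auto. split; auto. rewrite Hv, vf_app. auto.
Qed.

Lemma inf_chain rho D : Dgood rho D -> Cover rho D -> forall w0, Qw rho w0 ->
  ~ terminating (D ++ A_rules ++ B_rules).
Proof.
  intros HD HC w0 H0 Hterm. set (R := D ++ A_rules ++ B_rules) in *.
  set (Q' := fun w => exists w', star (step R) w w' /\ Qw rho w').
  assert (Hn : forall w, exists w', Q' w -> step R w w' /\ Q' w').
  { intro w. destruct (classic (Q' w)) as [[w' [Hs Hq]] | Hn].
    - destruct Hs as [x | x y z Hxy Hyz].
      + destruct (sim rho D HD HC x Hq) as [w1 [w2 [H1 [H2 H3]]]].
        exists w1; intros _; split; [auto| exists w2; auto].
      + exists y. intros _. split; auto. exists z; auto.
    - exists w. intro; contradiction. }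
  set (next := fun w => proj1_sig (constructive_indefinite_description _ (Hn w))).
  assert (Hnext : forall w, Q' w -> step R w (next w) /\ Q' (next w)).
  { intro w. unfold next. destruct (constructive_indefinite_description _ (Hn w)); simpl; auto. }
  set (f := fun i => Nat.iter i next w0).
  assert (HQ : forall i, Q' (f i)).
  { induction i; simpl. exists w0; split; [apply star_refl | auto]. apply Hnext; auto. }
  apply Hterm. exists f. intro i. apply (Hnext (f i) (HQ i)).
Qed.

Lemma enc_exists n : 1 <= n -> exists q, bins q /\ vf 1 q = n.
Proof.
  induction n as [n IH] using lt_wf_ind. intros Hn.
  destruct (Nat.eq_dec n 1) as [->|Hn1]; [exists []; split; [constructor|reflexivity]|].
  destruct (Nat.Even_or_Odd n) as [[k ->]|[k ->]].
  - destruct (IH k ltac:(lia) ltac:(lia)) as [q [Hq Hv]].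
    exists (q ++ [z2]). split; [apply Forall_app; auto|]. rewrite vf_app, Hv. reflexivity.
  - destruct (IH k ltac:(lia) ltac:(lia)) as [q [Hq Hv]].
    exists (q ++ [o2]). split; [apply Forall_app; auto|]. rewrite vf_app, Hv. reflexivity.
Qed.

Theorem dir_fwd rho D : Dgood rho D -> Cover rho D -> terminating (D ++ A_rules ++ B_rules) -> every_nonconv_hits rho.
Proof.
  intros HD HC Ht n Hn Hnc. apply NNPP. intro Hno.
  destruct (enc_exists n Hn) as [q [Hq Hv]].
  apply (inf_chain rho D HD HC (lhd :: q ++ [rhd])); auto.
  exists q. split; auto. split; auto. rewrite Hv. intro j. split; [apply Hnc|].
  intro E; apply Hno; eauto.
Qed.

Theorem generic rho D : Dgood rho D -> Cover rho D ->
  (terminating (D ++ A_rules ++ B_rules) <-> every_nonconv_hits rho).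
Proof. intros; split; [apply dir_fwd | apply dir_back]; auto. Qed.

Lemma even_2k k : Nat.even (2 * k) = true.
Proof. induction k; auto. replace (2 * S k) with (S (S (2 * k))) by lia. simpl; auto. Qed.
Lemma collatz_even k : collatz (2 * k) = k.
Proof. unfold collatz. rewrite even_2k. rewrite Nat.mul_comm, Nat.div_mul; lia. Qed.
Lemma even_2k1 k : Nat.even (2 * k + 1) = false.
Proof. induction k; auto. replace (2 * S k + 1) with (S (S (2 * k + 1))) by lia. simpl; auto. Qed.
Lemma collatz_odd k : collatz (2 * k + 1) = 6 * k + 4.
Proof. unfold collatz. rewrite even_2k1. lia. Qed.

Lemma snoc q : bins q -> q = [] \/ exists q1 c, q = q1 ++ [c] /\ bins q1 /\ (c = z2 \/ c = o2).
Proof.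
  destruct q as [|c0 q0] using rev_ind; auto. intros H. right. unfold bins in H.
  apply Forall_app in H as [H1 H2]. inversion H2; subst. exists q0, c0. split; auto. split; auto.
  destruct c0; simpl in *; try discriminate; auto.
Qed.

Ltac modc := match goal with |- context [?x mod 4] => pose proof (mod4_spec x) end; lia.

Lemma sem_DE1 : sem 2 [z2;z2] [z2].
Proof. intros a Ha; unfold vf; cbn [fold_left dstep]. repeat split; [lia|modc|]. left. rewrite collatz_even. lia. Qed.
Lemma sem_DE2 : sem 0 [o2;z2] [o2].
Proof. intros a Ha; unfold vf; cbn [fold_left dstep]. repeat split; [lia|modc|]. left. rewrite collatz_even. lia. Qed.
Lemma sem_DE3 rho : rho = 0 \/ rho = 2 -> sem rho [o2] [t3;z2].
Proof. intros Hr a Ha; unfold vf; cbn [fold_left dstep]. repeat split; [lia|modc|]. left. rewrite collatz_odd. lia. Qed.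
Lemma sem_DO1 rho : rho = 1 \/ rho = 3 -> sem rho [z2] [].
Proof. intros Hr a Ha; unfold vf; cbn [fold_left dstep]. repeat split; [lia|modc|]. left. rewrite collatz_even. lia. Qed.
Lemma sem_DO2 : sem 3 [z2;o2] [o3;z2].
Proof.
  intros a Ha; unfold vf; cbn [fold_left dstep]. repeat split; [lia|modc|]. right.
  rewrite collatz_odd. replace (6 * (2 * a) + 4) with (2 * (6 * a + 2)) by lia.
  rewrite collatz_even. repeat split; [lia|lia|modc].
Qed.
Lemma sem_DO3 : sem 1 [o2;o2] [t3;o2].
Proof.
  intros a Ha; unfold vf; cbn [fold_left dstep]. repeat split; [lia|modc|]. right.
  rewrite collatz_odd. replace (6 * (2 * a + 1) + 4) with (2 * (6 * a + 5)) by lia.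
  rewrite collatz_even. repeat split; [lia|lia|modc].
Qed.

Ltac dg sm := do 2 eexists; split; [reflexivity|]; split; [reflexivity|];
  repeat split; try reflexivity; [simpl; lia || (right; split; [eexists; reflexivity|split; [eexists; reflexivity|reflexivity]]) | apply sm].

Lemma Dgood1 : Dgood 0 [DE2; DE3].
Proof.
  intros l r H; simpl in H; destruct H as [H|[H|[]]]; inversion H; subst.
  - exists [o2;z2], [o2]. do 6 (split; [reflexivity|]). split. left; simpl; lia. apply sem_DE2.
  - exists [o2], [t3;z2]. do 6 (split; [reflexivity|]). split. right; split; [exists []; reflexivity|split; [exists [t3]; reflexivity|reflexivity]]. apply sem_DE3; auto.
Qed.
Lemma Dgood2 : Dgood 2 [DE1; DE3].
Proof.
  intros l r H; simpl in H; destruct H as [H|[H|[]]]; inversion H; subst.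
  - exists [z2;z2], [z2]. do 6 (split; [reflexivity|]). split. left; simpl; lia. apply sem_DE1.
  - exists [o2], [t3;z2]. do 6 (split; [reflexivity|]). split. right; split; [exists []; reflexivity|split; [exists [t3]; reflexivity|reflexivity]]. apply sem_DE3; auto.
Qed.
Lemma Dgood3 : Dgood 1 [DO1; DO3].
Proof.
  intros l r H; simpl in H; destruct H as [H|[H|[]]]; inversion H; subst.
  - exists [z2], []. do 6 (split; [reflexivity|]). split. left; simpl; lia. apply sem_DO1; auto.
  - exists [o2;o2], [t3;o2]. do 6 (split; [reflexivity|]). split. left; simpl; lia. apply sem_DO3.
Qed.
Lemma Dgood4 : Dgood 3 [DO1; DO2].
Proof.
  intros l r H; simpl in H; destruct H as [H|[H|[]]]; inversion H; subst.
  - exists [z2], []. do 6 (split; [reflexivity|]). split. left; simpl; lia. apply sem_DO1; auto.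
  - exists [z2;o2], [o3;z2]. do 6 (split; [reflexivity|]). split. left; simpl; lia. apply sem_DO2.
Qed.

Lemma traj0 n : traj n 0 = n. Proof. reflexivity. Qed.
Ltac kill_mod Ht := exfalso; apply (proj2 (Ht 0)); rewrite traj0;
  rewrite ?vf_app; match goal with |- context [vf 1 ?q] => remember (vf 1 q) as y end;
  unfold vf; cbn [fold_left dstep]; modc.

Lemma Cover1 : Cover 0 [DE2; DE3].
Proof.
  intros q Hq Ht. destruct (snoc q Hq) as [->|[q1 [c [-> [Hq1 [->| ->]]]]]].
  - exfalso; apply (proj1 (Ht 0)); reflexivity.
  - destruct (snoc q1 Hq1) as [->|[q2 [c' [-> [Hq2 [->| ->]]]]]].
    + exfalso; apply (proj1 (Ht 1)); reflexivity.
    + kill_mod Ht.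
    + exists q2, [o2;z2], [o2]. split; [simpl; tauto|]. split; [leq|]. left; repeat constructor.
  - exists q1, [o2], [t3;z2]. split; [simpl; tauto|]. split; [leq|]. right.
    exists t3, [z2]. split; auto. split; auto. repeat constructor.
Qed.
Lemma Cover2 : Cover 2 [DE1; DE3].
Proof.
  intros q Hq Ht. destruct (snoc q Hq) as [->|[q1 [c [-> [Hq1 [->| ->]]]]]].
  - exfalso; apply (proj1 (Ht 0)); reflexivity.
  - destruct (snoc q1 Hq1) as [->|[q2 [c' [-> [Hq2 [->| ->]]]]]].
    + exfalso; apply (proj1 (Ht 1)); reflexivity.
    + exists q2, [z2;z2], [z2]. split; [simpl; tauto|]. split; [leq|]. left; repeat constructor.
    + kill_mod Ht.
  - exists q1, [o2], [t3;z2]. split; [simpl; tauto|]. split; [leq|]. right.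
    exists t3, [z2]. split; auto. split; auto. repeat constructor.
Qed.
Lemma Cover3 : Cover 1 [DO1; DO3].
Proof.
  intros q Hq Ht. destruct (snoc q Hq) as [->|[q1 [c [-> [Hq1 [->| ->]]]]]].
  - exfalso; apply (proj1 (Ht 0)); reflexivity.
  - exists q1, [z2], []. split; [simpl; tauto|]. split; [leq|]. left; constructor.
  - destruct (snoc q1 Hq1) as [->|[q2 [c' [-> [Hq2 [->| ->]]]]]].
    + exfalso; apply (proj1 (Ht 7)); reflexivity.
    + kill_mod Ht.
    + exists q2, [o2;o2], [t3;o2]. split; [simpl; tauto|]. split; [leq|]. right.
      exists t3, [o2]. split; auto. split; auto. repeat constructor.
Qed.
Lemma Cover4 : Cover 3 [DO1; DO2].
Proof.
  intros q Hq Ht. destruct (snoc q Hq) as [->|[q1 [c [-> [Hq1 [->| ->]]]]]].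
  - exfalso; apply (proj1 (Ht 0)); reflexivity.
  - exists q1, [z2], []. split; [simpl; tauto|]. split; [leq|]. left; constructor.
  - destruct (snoc q1 Hq1) as [->|[q2 [c' [-> [Hq2 [->| ->]]]]]].
    + exfalso; apply (proj2 (Ht 0)); reflexivity.
    + exists q2, [z2;o2], [o3;z2]. split; [simpl; tauto|]. split; [leq|]. right.
      exists o3, [z2]. split; auto. split; auto. repeat constructor.
    + kill_mod Ht.
Qed.

Theorem mainTheorem15 :
  (terminating (srs_remove C_srs DE1) <-> every_nonconv_hits 0) /\
  (terminating (srs_remove C_srs DE2) <-> every_nonconv_hits 2) /\
  (terminating (srs_remove T_srs DO2) <-> every_nonconv_hits 1) /\
  (terminating (srs_remove T_srs DO3) <-> every_nonconv_hits 3).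
Proof.
  split; [|split; [|split]].
  - change (srs_remove C_srs DE1) with ([DE2; DE3] ++ A_rules ++ B_rules).
    apply generic; [apply Dgood1 | apply Cover1].
  - change (srs_remove C_srs DE2) with ([DE1; DE3] ++ A_rules ++ B_rules).
    apply generic; [apply Dgood2 | apply Cover2].
  - change (srs_remove T_srs DO2) with ([DO1; DO3] ++ A_rules ++ B_rules).
    apply generic; [apply Dgood3 | apply Cover3].
  - change (srs_remove T_srs DO3) with ([DO1; DO2] ++ A_rules ++ B_rules).
    apply generic; [apply Dgood4 | apply Cover4].
Qed.
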